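(* Let $R$ be a commutative ring. An $n\times n$ matrix $X$ over $R$ satisfies $XA=AX^T$ for every $n\times n$ reverse circulant matrix $A$ over $R$ if and only if $X$ is a circulant matrix.
   Context: An $n\times n$ matrix $(a_{ij})$ is circulant if $a_{ij}$ depends only on $(j-i)\bmod n$, and reverse circulant if $a_{ij}$ depends only on $(i+j)\bmod n$. *)

(* Defs.v *)
From mathcomp Require Import all_boot all_order all_algebra.
Set Implicit Arguments. Unset Strict Implicit. Unset Printing Implicit Defensive.
Import GRing.Theory.
Local Open Scope ring_scope.

Definition circulant (R : Type) (n : nat) (A : 'M[R]_n) : Prop :=
  forall i j i' j' : 'I_n,
    ((j + n - i) %% n = (j' + n - i') %% n)%N -> A i j = A i' j'.

Definition reverse_circulant (R : Type) (n : nat) (A : 'M[R]_n) : Prop :=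
  forall i j i' j' : 'I_n,
    ((i + j) %% n = (i' + j') %% n)%N -> A i j = A i' j'.

(* Main.v *)
Require Import Defs.
From mathcomp Require Import all_boot all_order all_algebra.
Local Open Scope ring_scope.
Import GRing.Theory.

Lemma valZpB (n : nat) (i j : 'I_n.+1) : val (j - i) = ((j + n.+1 - i) %% n.+1)%N.
Proof.
rewrite /= /Zp_add /Zp_opp /inZp /= modnDmr addnBA //.
by apply: ltnW; exact: ltn_ord.
Qed.

Lemma valZpD (n : nat) (i j : 'I_n.+1) : val (i + j) = ((i + j) %% n.+1)%N.
Proof. by []. Qed.

Lemma circP (R : Type) n (X : 'M[R]_n.+1) :
  circulant X <-> forall i j i' j' : 'I_n.+1, j - i = j' - i' -> X i j = X i' j'.
Proof.
split=> H i j i' j' E; apply: (H i j i' j').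
  by rewrite -[LHS]valZpB -[RHS]valZpB E.
by apply: val_inj; rewrite !valZpB.
Qed.

Lemma rcircP (R : Type) n (X : 'M[R]_n.+1) :
  reverse_circulant X <-> forall i j i' j' : 'I_n.+1, i + j = i' + j' -> X i j = X i' j'.
Proof.
split=> H i j i' j' E; apply: (H i j i' j').
  by rewrite -[LHS]valZpD -[RHS]valZpD E.
by apply: val_inj; rewrite !valZpD.
Qed.

Theorem mainTheorem5 (R : comPzRingType) (n : nat) (X : 'M[R]_n) :
  (forall A : 'M[R]_n, reverse_circulant A -> X *m A = A *m X^T) <->
  circulant X.
Proof.
case: n X => [|n] X.
  split=> _; first by move=> [].
  by move=> A _; apply/matrixP => -[].
split.
- move=> H; apply/circP.
  have key : forall i k s : 'I_n.+1, X i (s - k) = X k (s - i).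
    move=> i k s.
    pose A : 'M[R]_n.+1 := \matrix_(a, b) ((a + b == s)%:R).
    have rA : reverse_circulant A.
      by apply/rcircP => a b a' b' E; rewrite !mxE E.
    have := congr1 (fun M : 'M[R]_n.+1 => M i k) (H A rA).
    rewrite !mxE (bigD1 (s - k)) //= big1 => [|j /negbTE Hj]; last first.
      rewrite mxE; suff -> : (j + k == s) = false by rewrite mulr0.
      by apply/negbTE; apply: contraFN Hj => /eqP <-; rewrite addrK.
    rewrite (bigD1 (s - i)) //= big1 => [|j /negbTE Hj]; last first.
      rewrite !mxE; suff -> : (i + j == s) = false by rewrite mul0r.
      by apply/negbTE; apply: contraFN Hj => /eqP <-; rewrite addrC addKr.
    rewrite !mxE addrNK subrKC eqxx mulr1 mul1r !addr0 => ->.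
    done.
  move=> i j i' j' E.
  have := key i i' (j + i'); rewrite addrK => ->.
  congr (X _ _).
  by rewrite -addrA [i' - i]addrC addrA E addrNK.
- move/circP=> H A /rcircP rA.
  apply/matrixP => i k; rewrite !mxE.
  have hA : forall a b, A a b = A (a + b) 0 by move=> a b; apply: rA; rewrite addr0.
  have hX : forall a b, X a b = X 0 (b - a) by move=> a b; apply: H; rewrite subr0.
  rewrite [LHS](reindex_inj (addIr i)) [RHS](reindex_inj (addIr k)) /=.
  apply: eq_bigr => m _; rewrite !mxE hA [A i _]hA hX [X k _]hX !addrK mulrC.
  by rewrite addrA (addrC m).
Qed.
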